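(* Let $1\le l\le m$ and $0\le r\le\lfloor(m-l-1)/2\rfloor$. Then the binary convolutional code $C=\Gamma_2G$ generated by the semi-infinite matrix $G$ described in the context is self-orthogonal, i.e. $C\subseteq C^\perp$.
   Context: For $u,v\in\mathbf F_2^N$ the boolean product is $uv=(u_1v_1,\dots,u_Nv_N)$. For $s\ge1$ let $b_0\in\mathbf F_2^{2^s}$ be all-ones and for $1\le i\le s$ let $b_i\in\mathbf F_2^{2^s}$ be the concatenation of $2^{s-i}$ blocks $(\mathbf 0\,\mathbf 1)$ with $\mathbf 0,\mathbf 1\in\mathbf F_2^{2^{i-1}}$ constant. Let $B_s^i$ be the matrix whose rows are all products of $i$ distinct elements of $\{b_1,\dots,b_s\}$ ($B_s^0=b_0$; empty for $i<0$ or $i>s$), and $G_s^r$ the matrix with rows $B_s^r,\dots,B_s^0$ stacked (empty if $r<0$), a generator matrix of the Reed–Muller code $\mathcal R(r,s)$. Let $w_j=(1,1,0,\dots,0)\in\mathbf F_2^{2^j}$ and $c\,w_j$ the concatenation of $c$ copies. For $0\le i\le l-1$, $M_{i,l}=(2^{l-i-1}w_{i+1})\otimes B_{m-l}^{r-i}$ (Kronecker product), and $M_{l,l}=[G_{m-l}^{r-l}\ 0\ \cdots\ 0]$ with $2^m$ columns. Define $G_0,\dots,G_{2^l-1}$ (each with $2^{m-l}$ columns) by $[G_0\ \cdots\ G_{2^l-1}]$ = row blocks $M_{0,l},\dots,M_{l,l}$ stacked. $G$ is the semi-infinite matrix whose $j$-th block row has $G_0,\dots,G_{2^l-1}$ in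 block columns $j,\dots,j+2^l-1$ and zeros elsewhere. $\Gamma_2$ = finitely supported binary sequences; $C^\perp$ is the Euclidean dual in $\Gamma_2$. *)

(* Defs.v *)
From HB Require Import structures.
From mathcomp Require Import all_boot all_order all_algebra.
Set Implicit Arguments. Unset Strict Implicit. Unset Printing Implicit Defensive.
Import GRing.Theory.
Local Open Scope ring_scope.

Definition F2 : finFieldType := 'F_2.

(* Vectors of F_2^N are represented by functions nat -> F2 (entry p, 0-indexed,
   for p < N; entries beyond the length are never used). *)
Definition vec := nat -> F2.

(* b_0 = all ones; for i >= 1, b_i = concatenation of blocks (0 1) with
   0,1 constant of length 2^(i-1): entry p is bit (i-1) of p. *)
Definition bvec (i : nat) : vec :=
  fun p => if i == 0%N then 1 else (odd (p %/ 2 ^ i.-1)%N)%:R.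

Definition monomial (s : nat) (A : {set 'I_s}) : vec :=
  fun p => \prod_(k in A) bvec k.+1 p.

(* rows of B_s^i : all products of i distinct elements of {b_1,...,b_s};
   B_s^0 = b_0; empty for i < 0 or i > s *)
Definition Brows (s : nat) (i : int) : seq vec :=
  match i with
  | Posz d => [seq monomial A | A <- enum [set A : {set 'I_s} | #|A| == d]]
  | Negz _ => [::]
  end.

(* rows of G_s^r : B_s^r, ..., B_s^0 stacked (empty if r < 0) *)
Definition Grows (s : nat) (r : int) : seq vec :=
  match r with
  | Posz d => flatten [seq Brows s (Posz (d - i)%N) | i <- iota 0 d.+1]
  | Negz _ => [::]
  end.

(* c w_j : concatenation of copies of w_j = (1,1,0,...,0) in F_2^(2^j) *)
Definition wrep (j : nat) : vec := fun p => if (p %% 2 ^ j < 2)%N then 1 else 0.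

(* row (2^(l-i-1) w_{i+1}) (x) v  for v a row of B_{m-l}^{r-i}; length 2^m *)
Definition kronrow (l m i : nat) (v : vec) : vec :=
  fun p => wrep i.+1 (p %/ 2 ^ (m - l))%N * v (p %% 2 ^ (m - l))%N.

(* row [g 0 ... 0] of M_{l,l}, length 2^m *)
Definition padrow (l m : nat) (v : vec) : vec :=
  fun p => if (p < 2 ^ (m - l))%N then v p else 0.

(* rows of the matrix [G_0 ... G_{2^l-1}] = M_{0,l}, ..., M_{l,l} stacked *)
Definition Mrows (l m r : nat) : seq vec :=
  flatten [seq [seq kronrow l m i v | v <- Brows (m - l) (r%:Z - i%:Z)]
          | i <- iota 0 l]
  ++ [seq padrow l m v | v <- Grows (m - l) (r%:Z - l%:Z)].

(* row of the semi-infinite matrix G in block row j coming from the row v of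
   [G_0 ... G_{2^l-1}]: v placed starting at column j * 2^(m-l) *)
Definition Grow (l m j : nat) (v : vec) : vec :=
  fun t => if (j * 2 ^ (m - l) <= t < j * 2 ^ (m - l) + 2 ^ m)%N
           then v (t - j * 2 ^ (m - l))%N else 0.

Definition Gamma2 (y : vec) : Prop := exists T, forall t, (T <= t)%N -> y t = 0.

(* C = Gamma_2 G : the sequences x G with x finitely supported (x j a is the
   coefficient of row a of block row j) *)
Definition conv_code (l m r : nat) (c : vec) : Prop :=
  exists (x : nat -> nat -> F2) (J : nat), forall t,
    c t = \sum_(j < J) \sum_(a < size (Mrows l m r))
            x j a * Grow l m j (nth (fun _ => 0) (Mrows l m r) a) t.

(* Euclidean dual in Gamma_2 (the inner product is the finite sum over any
   range containing the support) *)
Definition dual (C : vec -> Prop) (y : vec) : Prop :=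
  Gamma2 y /\
  forall c, C c -> forall T, (forall t, (T <= t)%N -> c t = 0) ->
    \sum_(t < T) c t * y t = 0.

(* Main.v *)
Require Import Defs.
From mathcomp Require Import all_boot all_order all_algebra zify.
Import GRing.Theory.
Local Open Scope ring_scope.
Lemma two0 (x : F2) : x + x = 0.
Proof. rewrite -mulr2n -mulr_natr. have -> : (2%:R : F2) = 0 by apply: val_inj. by rewrite mulr0. Qed.

Definition bitf (k p : nat) : F2 := (odd (p %/ 2 ^ k))%:R.

Lemma bitf_small n p : (p < 2 ^ n)%N -> bitf n p = 0.
Proof. by move=> h; rewrite /bitf divn_small. Qed.

Lemma bitf_top n p : (p < 2 ^ n)%N -> bitf n (p + 2 ^ n) = 1.
Proof.
move=> h; rewrite /bitf divnDr ?dvdnn // divn_small // divnn expn_gt0 /=.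
by [].
Qed.

Lemma bitf_low n k p : (k < n)%N -> bitf k (p + 2 ^ n) = bitf k p.
Proof.
move=> hk; rewrite /bitf.
have hd : (2 ^ k %| 2 ^ n)%N by rewrite dvdn_exp2l // ltnW.
rewrite (divnDr _ hd).
have -> : (2 ^ n %/ 2 ^ k = 2 ^ (n - k))%N by rewrite expnB // ltnW.
rewrite oddD oddX.
have -> : (n - k == 0)%N = false by apply/negbTE; rewrite subn_eq0 -ltnNge.
by rewrite /= addbF.
Qed.

Lemma key n (P : pred nat) : (exists2 k, (k < n)%N & ~~ P k) ->
  \sum_(p < (2 ^ n)%N) \prod_(k < n) (if P k then bitf k p else 1) = 0.
Proof.
elim: n => [[k]//|n IH] Hex.
rewrite -(big_mkord xpredT (fun p => \prod_(k < n.+1) (if P k then bitf k p else 1))).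
have h2 : (2 ^ n <= 2 ^ n.+1)%N by rewrite leq_exp2l.
rewrite (big_cat_nat _ (n := 2 ^ n)) //=.
have -> : (2 ^ n.+1 = 2 ^ n + 2 ^ n)%N by rewrite expnS mul2n -addnn.
rewrite -{2}[(2 ^ n)%N]add0n big_addn addnK.
under eq_bigr do rewrite big_ord_recr /=.
under [X in _ + X]eq_bigr => p _.
  rewrite big_ord_recr /=.
  under eq_bigr => k _ do rewrite bitf_low //.
  over.
rewrite /=.
case: (boolP (P n)) => Pn /=.
  rewrite big1_seq ?add0r; last first.
    move=> p; rewrite mem_index_iota => /andP[_ hp].
    by rewrite bitf_small // mulr0.
  rewrite big_seq_cond.
  rewrite (eq_bigr (fun p => \prod_(k < n) (if P k then bitf k p else 1))); last first.
    move=> p; rewrite andbT mem_index_iota => /andP[_ hp].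
    by rewrite bitf_top // mulr1.
  rewrite -big_seq_cond big_mkord; apply: IH.
  case: Hex => k hk Pk; exists k => //.
  rewrite ltnS leq_eqVlt in hk; case/orP: hk => // /eqP ek.
  by rewrite ek Pn in Pk.
rewrite -big_split /=; apply: big1 => i _; rewrite mulr1; exact: two0.
Qed.

Lemma monoE n (A : {set 'I_n}) p :
  monomial A p = \prod_(k < n) (if k \in A then bitf k p else 1).
Proof. by rewrite /monomial big_mkcond. Qed.

Lemma mono_pair n r (A B : {set 'I_n}) : (#|A| <= r)%N -> (#|B| <= r)%N ->
  (2 * r < n)%N -> \sum_(p < (2 ^ n)%N) monomial A p * monomial B p = 0.
Proof.
move=> hA hB hn.
have hC : (#|A :|: B| < n)%N.
  rewrite cardsU; lia.
have [k Hk] : exists k, k \notin A :|: B.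
  case: (pickP (fun k => k \notin A :|: B)) => [k Hk|H]; first by exists k.
  have : [set: 'I_n] \subset A :|: B by apply/subsetP => x _; move: (H x) => /= /negbFE.
  by move/subset_leq_card; rewrite cardsT card_ord leqNgt hC.
pose P := fun j : nat => j \in [seq val x | x <- enum (A :|: B)].
have PE : forall j : 'I_n, P j = (j \in A :|: B).
  by move=> j; rewrite /P mem_map ?mem_enum //; apply: val_inj.
transitivity (\sum_(p < (2 ^ n)%N) \prod_(k < n) (if P k then bitf k p else 1)); last first.
  by apply: key; exists k => //; rewrite PE.
apply: eq_bigr => p _; rewrite !monoE -big_split /=; apply: eq_bigr => j _.
rewrite PE in_setU.
by case: (j \in A); case: (j \in B); rewrite ?mulr1 ?mul1r //= /bitf; case: odd; rewrite ?mulr1 ?mulr0.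
Qed.

Definition lowdeg n r (u : vec) := exists s : seq (F2 * {set 'I_n}),
  all (fun e : F2 * {set 'I_n} => (#|e.2| <= r)%N) s /\
  forall p, (p < 2 ^ n)%N -> u p = \sum_(e <- s) e.1 * monomial e.2 p.

Lemma ortho_low n r u u' : (2 * r < n)%N -> lowdeg n r u -> lowdeg n r u' ->
  \sum_(p < (2 ^ n)%N) u p * u' p = 0.
Proof.
move=> hn [s [hs Hu]] [s' [hs' Hu']].
under eq_bigr => p _ do rewrite Hu ?ltn_ord // Hu' ?ltn_ord // big_distrlr /=.
rewrite exchange_big /=; apply: big1_seq => e /andP[_ he].
rewrite exchange_big /=; apply: big1_seq => e' /andP[_ he'].
under eq_bigr do rewrite mulrACA.
rewrite -mulr_sumr (@mono_pair n r) ?mulr0 //.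
  by move/allP: hs => /(_ e he).
by move/allP: hs' => /(_ e' he').
Qed.

Definition blockgood n r (w : vec) := forall b, lowdeg n r (fun p => w (b * 2 ^ n + p)%N).

Lemma ortho_block n r w w' K : (2 * r < n)%N -> blockgood n r w -> blockgood n r w' ->
  \sum_(t < (K * 2 ^ n)%N) w t * w' t = 0.
Proof.
move=> hn bw bw'; elim: K => [|K IH]; first by rewrite mul0n big_ord0.
rewrite -(big_mkord xpredT (fun t => w t * w' t)) mulSnr (big_cat_nat _ (n := (K * 2 ^ n)%N)) ?leq_addr //=.
rewrite big_mkord IH add0r.
rewrite -{1}[(K * 2 ^ n)%N]add0n big_addn addKn big_mkord.
under eq_bigr do rewrite addnC.

exact: (@ortho_low n r _ _ hn (bw K) (bw' K)).
Qed.

Lemma blockgood_ext n r w w' : blockgood n r w -> (forall t, w t = w' t) -> blockgood n r w'.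
Proof.
move=> bw E b; case: (bw b) => s [hs Hs]; exists s; split => // p hp.
by rewrite -E Hs.
Qed.

Lemma blockgood0 n r : blockgood n r (fun _ => 0).
Proof. by move=> b; exists [::]; split => // p _; rewrite big_nil. Qed.

Lemma blockgoodD n r w w' : blockgood n r w -> blockgood n r w' ->
  blockgood n r (fun t => w t + w' t).
Proof.
move=> bw bw' b; case: (bw b) => s [hs Hs]; case: (bw' b) => s' [hs' Hs'].
exists (s ++ s'); split; first by rewrite all_cat hs hs'.
by move=> p hp; rewrite big_cat /= Hs // Hs'.
Qed.

Lemma blockgoodZ n r (x : F2) w : blockgood n r w -> blockgood n r (fun t => x * w t).
Proof.
move=> bw b; case: (bw b) => s [hs Hs].
exists [seq (x * e.1, e.2) | e <- s]; split.
  by rewrite all_map; apply: sub_all hs => e.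
move=> p hp; rewrite big_map Hs // mulr_sumr; apply: eq_bigr => e _.
by rewrite mulrA.
Qed.

Lemma blockgood_sum n r (I : Type) (s : seq I) (P : pred I) (F : I -> vec) :
  (forall i, blockgood n r (F i)) ->
  blockgood n r (fun t => \sum_(i <- s | P i) F i t).
Proof.
move=> HF; elim: s => [|i s IH].
  by apply: (@blockgood_ext n r _ _ (blockgood0 n r)) => t; rewrite big_nil.
case Pi: (P i).
  by apply: (@blockgood_ext n r _ _ (@blockgoodD n r _ _ (HF i) IH)) => t; rewrite big_cons Pi.
by apply: (@blockgood_ext n r _ _ IH) => t; rewrite big_cons Pi.
Qed.

Definition rowok n r (v : vec) := exists A : {set 'I_n}, (#|A| <= r)%N /\
  exists c : nat -> F2, forall q p, (p < 2 ^ n)%N -> v (q * 2 ^ n + p)%N = c q * monomial A p.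

Lemma blockgood_Grow l m r j v : (l <= m)%N -> rowok (m - l) r v ->
  blockgood (m - l) r (Grow l m j v).
Proof.
move=> hlm [A [hA [c Hc]]] b.
set N := (2 ^ (m - l))%N.
have N0 : (0 < N)%N by rewrite expn_gt0.
exists [:: ((if (j <= b < j + 2 ^ l)%N then c (b - j)%N else 0), A)].
split; first by rewrite /= hA.
move=> p hp; rewrite big_seq1 /Grow /=.
have hm : (2 ^ m = 2 ^ l * N)%N by rewrite -expnD subnKC.
have hd : ((b * N + p) %/ N = b)%N by rewrite divnMDl // divn_small // addn0.
have c1 : (j * N <= b * N + p)%N = (j <= b)%N by rewrite -leq_divRL // hd.
have c2 : (b * N + p < j * N + 2 ^ m)%N = (b < j + 2 ^ l)%N.
  by rewrite hm -mulnDl -ltn_divLR // hd.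
rewrite c1 c2.
case: ifP => [/andP[h1 h2]|_]; last by rewrite mul0r.
rewrite -addnBAC; last by rewrite leq_mul2r h1 orbT.
by rewrite -mulnBl Hc.
Qed.

Lemma rowok_kron l m r i (A : {set 'I_(m - l)}) : (#|A| <= r)%N ->
  rowok (m - l) r (kronrow l m i (monomial A)).
Proof.
move=> hA; exists A; split => //; exists (fun q => wrep i.+1 q) => q p hp.
rewrite /kronrow divnMDl ?expn_gt0 // divn_small // addn0.
by rewrite modnMDl modn_small.
Qed.

Lemma rowok_pad l m r (A : {set 'I_(m - l)}) : (#|A| <= r)%N ->
  rowok (m - l) r (padrow l m (monomial A)).
Proof.
move=> hA; exists A; split => //; exists (fun q => if q == 0%N then 1 else 0) => q p hp.
rewrite /padrow; case: q => [|q] /=; first by rewrite mul0n add0n hp mul1r.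
rewrite mul0r ltnNge (_ : (2 ^ (m - l) <= q.+1 * 2 ^ (m - l) + p)%N) //.
by apply: leq_trans (leq_addr _ _); rewrite leq_pmull.
Qed.

Fixpoint allp (T : Type) (P : T -> Prop) (s : seq T) : Prop :=
  match s with [::] => True | x :: s' => P x /\ allp T P s' end.
Arguments allp {T} P s.

Lemma allp_cat T (P : T -> Prop) s1 s2 : allp P s1 -> allp P s2 -> allp P (s1 ++ s2).
Proof. by elim: s1 => //= x s IH [h1 h2] h3; split => //; apply: IH. Qed.

Lemma allp_map T U (P : U -> Prop) (f : T -> U) s :
  allp (fun x => P (f x)) s -> allp P (map f s).
Proof. by elim: s => //= x s IH [h1 h2]; split => //; apply: IH. Qed.

Lemma allp_flatten T (P : T -> Prop) ss : allp (allp P) ss -> allp P (flatten ss).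
Proof. by elim: ss => //= s ss IH [h1 h2]; apply: allp_cat => //; apply: IH. Qed.

Lemma allp_in (T : eqType) (P : T -> Prop) s : (forall x, x \in s -> P x) -> allp P s.
Proof.
elim: s => //= x s IH H; split; first by apply: H; rewrite inE eqxx.
by apply: IH => y hy; apply: H; rewrite inE hy orbT.
Qed.

Lemma allp_impl T (P Q : T -> Prop) s : (forall x, P x -> Q x) -> allp P s -> allp Q s.
Proof. by move=> H; elim: s => //= x s IH [h1 h2]; split; [apply: H | apply: IH]. Qed.

Lemma allp_nth T (P : T -> Prop) s d a : allp P s -> (a < size s)%N -> P (nth d s a).
Proof.
elim: s a => //= x s IH [|a] [h1 h2] ha //; exact: IH.
Qed.

Definition lowmono n r (v : vec) := exists A : {set 'I_n}, (#|A| <= r)%N /\ v = monomial A.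

Lemma Brows_ok n r (z : int) : (z <= r%:Z)%R -> allp (lowmono n r) (Brows n z).
Proof.
case: z => [d|d] hz //=.
rewrite lez_nat in hz.
apply: allp_map; apply: allp_in => A; rewrite mem_enum inE => /eqP hA.
by exists A; split => //; rewrite hA.
Qed.

Lemma Grows_ok n r (z : int) : (z <= r%:Z)%R -> allp (lowmono n r) (Grows n z).
Proof.
case: z => [d|d] hz //.
rewrite lez_nat in hz.
rewrite /Grows.
apply: allp_flatten; apply: allp_map; apply: allp_in => i _.
by apply: Brows_ok; rewrite lez_nat; apply: leq_trans (leq_subr _ _) hz.
Qed.

Lemma Mrows_ok l m r : allp (rowok (m - l) r) (Mrows l m r).
Proof.
apply: allp_cat.
  apply: allp_flatten; apply: allp_map; apply: allp_in => i _.
  apply: allp_map; apply: (@allp_impl _ (lowmono (m - l) r)).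
    by move=> v [A [hA ->]]; apply: rowok_kron.
  by apply: Brows_ok; lia.
apply: allp_map; apply: (@allp_impl _ (lowmono (m - l) r)).
  by move=> v [A [hA ->]]; apply: rowok_pad.
by apply: Grows_ok; lia.
Qed.

Lemma code_blockgood l m r c : (l <= m)%N -> conv_code l m r c -> blockgood (m - l) r c.
Proof.
move=> hlm [x [J Hc]].
apply: (@blockgood_ext _ _ _ _ _ (fun t => esym (Hc t))).
apply: blockgood_sum => j; apply: blockgood_sum => a.
apply: blockgoodZ; apply: blockgood_Grow => //.
apply: allp_nth; [exact: Mrows_ok | exact: ltn_ord].
Qed.

Theorem mainTheorem12 (l m r : nat) :
  (1 <= l)%N -> (l <= m)%N -> ((2 * r).+1 <= m - l)%N ->
  forall c : vec, conv_code l m r c -> dual (conv_code l m r) c.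
Proof.
move=> hl hlm hr c cc; split.
  case: cc => x [J Hc]; exists (J * 2 ^ (m - l) + 2 ^ m)%N => t ht.
  rewrite Hc; apply: big1 => j _; apply: big1 => a _.
  rewrite /Grow (_ : (t < _)%N = false) ?andbF ?mulr0 //.
  apply/negbTE; rewrite -leqNgt; apply: leq_trans ht.
  by rewrite leq_add2r leq_mul2r ltnW ?orbT.
move=> c' cc' T HT.
have hN : (T <= T * 2 ^ (m - l))%N by rewrite leq_pmulr // expn_gt0.
rewrite (@big_ord_widen _ 0 +%R T _ (fun t => c' t * c t) hN) big_mkcond /=.
transitivity (\sum_(t < (T * 2 ^ (m - l))%N) c' t * c t).
  apply: eq_bigr => t _; case: ifP => // /negbT; rewrite -leqNgt => /HT ->.
  by rewrite mul0r.
exact: (@ortho_block (m - l) r _ _ T hr (@code_blockgood l m r c' hlm cc') (@code_blockgood l m r c hlm cc)).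
Qed.
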